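(* Let $G=(V,E)$ be a naturally ordered DAG. The saturation ideal $I_G:S_G\subseteq\mathbb R[\Sigma]$ is prime.
   Context: $\mathbb R[\Sigma]$ is the polynomial ring in symmetric variables $\sigma_{ij}=\sigma_{ji}$, $i,j\in V=[p]$; $ij\in E\Rightarrow i<j$. $I_G$ is the ideal generated by $|\Sigma_{ij|\mathrm{pa}(j)}|$ for $i<j$ with $ij\notin E$, where $\Sigma_{ij|K}$ has rows $(i,K)$ and columns $(j,K)$. $S_G=\{\prod_{i\in V}|\Sigma_{\mathrm{pa}(i)}|^{k_i}:k_i\in\mathbb N\}$ and $I:S=\{f:fs\in I\text{ for some }s\in S\}$. *)

(* Defs.v *)
From HB Require Import structures.
From mathcomp Require Import all_boot all_order all_algebra.
From mathcomp Require Import multinomials.mpoly.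
From Stdlib Require Reals.
From mathcomp Require Import Rstruct.

Set Implicit Arguments.
Unset Strict Implicit.
Unset Printing Implicit Defensive.
Import Order.TTheory GRing.Theory Num.Theory.
Local Open Scope ring_scope.

(* Index set of the symmetric variables sigma_ij = sigma_ji: pairs (i,j), i <= j. *)
Definition symIdx (p : nat) := {x : 'I_p * 'I_p | leq x.1 x.2}.
Definition nvars (p : nat) : nat := #|{: symIdx p}|.

Notation polyS p := {mpoly Rdefinitions.R[nvars p]}.

Lemma sym_pair_ok p (i j : 'I_p) :
  leq (if leq i j then (i, j) else (j, i)).1 (if leq i j then (i, j) else (j, i)).2.
Proof. by case: (leqP i j) => [//|/ltnW]. Qed.

Definition sigma (p : nat) (i j : 'I_p) : polyS p :=
  'X_(enum_rank (exist (fun x : 'I_p * 'I_p => leq x.1 x.2) _ (sym_pair_ok i j))).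

(* A DAG on V = [p] given by its edge relation; E i j means i -> j. *)
Definition naturally_ordered (p : nat) (E : rel 'I_p) : Prop :=
  forall i j : 'I_p, E i j -> (i < j)%N.

Definition pa (p : nat) (E : rel 'I_p) (j : 'I_p) : {set 'I_p} := [set k | E k j].

Definition minor_det (p n : nat) (r c : 'I_n -> 'I_p) : polyS p :=
  \det (\matrix_(a < n, b < n) sigma (r a) (c b)).

Definition det_K (p : nat) (K : {set 'I_p}) : polyS p :=
  minor_det (fun a : 'I_#|K| => enum_val a) (fun a : 'I_#|K| => enum_val a).

(* |Sigma_{ij|K}| : rows (i,K), columns (j,K) *)
Definition det_ijK (p : nat) (i j : 'I_p) (K : {set 'I_p}) : polyS p :=
  minor_det (fun a : 'I_#|K|.+1 => oapp (fun b : 'I_#|K| => enum_val b) i (unlift ord0 a))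
            (fun a : 'I_#|K|.+1 => oapp (fun b : 'I_#|K| => enum_val b) j (unlift ord0 a)).

Definition gen_G (p : nat) (E : rel 'I_p) (ij : 'I_p * 'I_p) : polyS p :=
  det_ijK ij.1 ij.2 (pa E ij.2).
Definition is_gen (p : nat) (E : rel 'I_p) (ij : 'I_p * 'I_p) : bool :=
  (ij.1 < ij.2)%N && ~~ E ij.1 ij.2.

Definition I_G (p : nat) (E : rel 'I_p) (f : polyS p) : Prop :=
  exists c : 'I_p * 'I_p -> polyS p,
    f = \sum_(ij | is_gen E ij) c ij * gen_G E ij.

Definition S_G (p : nat) (E : rel 'I_p) (s : polyS p) : Prop :=
  exists k : 'I_p -> nat, s = \prod_(i : 'I_p) det_K (pa E i) ^+ k i.

Definition saturation (p : nat) (I S : polyS p -> Prop) (f : polyS p) : Prop :=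
  exists s, S s /\ I (f * s).

Definition prime_ideal (T : comRingType) (I : T -> Prop) : Prop :=
  [/\ I 0,
      forall a b, I a -> I b -> I (a + b),
      forall a b, I b -> I (a * b),
      ~ I 1 &
      forall a b, I (a * b) -> I a \/ I b].

(* Main.v *)
Require Import Defs.
From mathcomp Require Import all_boot all_algebra.
From mathcomp Require Import multinomials.mpoly.
From mathcomp Require Import Rstruct.
From mathcomp Require Import ring zify.
Set Implicit Arguments.
Unset Strict Implicit.
Unset Printing Implicit Defensive.
Import GRing.Theory.
Local Open Scope ring_scope.

Section Gen.
Variable n : nat.
Notation R := Rdefinitions.R.
Notation T := {mpoly R[n]}.

Lemma mpoly_ind2 (P : T -> Prop) :
  (forall c, P c%:MP) -> (forall u, P 'X_u) ->
  (forall f g, P f -> P g -> P (f + g)) ->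
  (forall f g, P f -> P g -> P (f * g)) -> forall f, P f.
Proof.
move=> hC hX hD hM f; elim/mpolyind: f => [|c m q _ _ hq].
  by rewrite -mpolyC0.
apply: (hD) => //; rewrite -mul_mpolyC; apply: (hM) => //.
rewrite mpolyXE_id; apply: (big_ind P); [by rewrite -mpolyC1 | exact: hM | ].
move=> i ?; move: (m i) => k; elim: k => [|k IH]; first by rewrite expr0 -mpolyC1.
by rewrite exprS; apply: (hM).
Qed.

Lemma mmap_ext (S : ringType) (f1 f2 : R -> S) (h1 h2 : 'I_n -> S) g :
  f1 =1 f2 -> h1 =1 h2 -> mmap f1 h1 g = mmap f2 h2 g.
Proof.
move=> ef eh; rewrite /mmap; apply: eq_bigr => m _.
by rewrite ef (mmap1_eq _ eh).
Qed.

Lemma mmapXU (S : comRingType) (f : {rmorphism R -> S}) (h : 'I_n -> S) u :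
  mmap f h 'X_u = h u.
Proof. by rewrite mmapX mmap1U. Qed.


Notation kill A := (mmap (@mpolyC n R) (fun u => if A u then 'X_u else 0)).
Definition inT (A : pred 'I_n) (f : T) := kill A f = f.

Lemma kill_X (A : pred 'I_n) u : kill A 'X_u = if A u then 'X_u else 0.
Proof. exact: mmapXU. Qed.

Lemma mmap_kill (S : comRingType) (f : {rmorphism R -> S}) (h : 'I_n -> S)
  (A : pred 'I_n) g :
  mmap f h (kill A g) = mmap f (fun u => if A u then h u else 0) g.
Proof.
elim/mpoly_ind2: g => [c|u|g1 g2 h1 h2|g1 g2 h1 h2].
- by rewrite !mmapC.
- by rewrite kill_X mmapXU; case: (A u); rewrite ?mmapXU ?rmorph0.
- by rewrite !rmorphD /= h1 h2.
- by rewrite !rmorphM /= h1 h2.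
Qed.

Lemma kill_id (A : pred 'I_n) g : (forall u, A u) -> kill A g = g.
Proof.
move=> hA; elim/mpoly_ind2: g => [c|u|g1 g2 h1 h2|g1 g2 h1 h2].
- by rewrite mmapC.
- by rewrite kill_X hA.
- by rewrite rmorphD /= h1 h2.
- by rewrite rmorphM /= h1 h2.
Qed.

Lemma inT_mmap (S : comRingType) (f : {rmorphism R -> S}) (h1 h2 : 'I_n -> S)
  (A : pred 'I_n) g :
  inT A g -> (forall u, A u -> h1 u = h2 u) -> mmap f h1 g = mmap f h2 g.
Proof.
move=> hg eh; rewrite -hg !mmap_kill; apply: mmap_ext => // u.
by case hu: (A u) => //; rewrite eh.
Qed.

Lemma inT_kill (A : pred 'I_n) g : inT A (kill A g).
Proof. by rewrite /inT mmap_kill; apply: mmap_ext => // u; case: (A u). Qed.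

Lemma inT_mono (A A' : pred 'I_n) g :
  (forall u, A u -> A' u) -> inT A g -> inT A' g.
Proof.
move=> hA hg; rewrite /inT -hg mmap_kill; apply: mmap_ext => // u.
by case hu: (A u) => //; rewrite hA.
Qed.

Lemma inT_C (A : pred 'I_n) c : inT A c%:MP.
Proof. by rewrite /inT mmapC. Qed.
Lemma inT_X (A : pred 'I_n) u : A u -> inT A 'X_u.
Proof. by move=> hu; rewrite /inT kill_X hu. Qed.
Lemma inT_D (A : pred 'I_n) f g : inT A f -> inT A g -> inT A (f + g).
Proof. by rewrite /inT rmorphD => /= -> ->. Qed.
Lemma inT_M (A : pred 'I_n) f g : inT A f -> inT A g -> inT A (f * g).
Proof. by rewrite /inT rmorphM => /= -> ->. Qed.
Lemma inT_N (A : pred 'I_n) f : inT A f -> inT A (- f).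
Proof. by rewrite /inT rmorphN => /= ->. Qed.
Lemma inT_X' (A : pred 'I_n) f k : inT A f -> inT A (f ^+ k).
Proof. by rewrite /inT rmorphXn => /= ->. Qed.
Lemma inT_sum (A : pred 'I_n) (I : finType) (F : I -> T) :
  (forall i, inT A (F i)) -> inT A (\sum_i F i).
Proof.
move=> hF; apply: (big_ind (inT A)) => //; last by move=> *; apply: inT_D.
by rewrite -mpolyC0; apply: inT_C.
Qed.
Lemma inT_det (A : pred 'I_n) m (M : 'M[T]_m) :
  (forall a b, inT A (M a b)) -> inT A (\det M).
Proof.
move=> hM; rewrite /inT -det_map_mx; congr (\det _).
by apply/matrixP => a b; rewrite mxE; exact: hM.
Qed.

Notation K := {fraction T}.
Local Notation "x %:F" := (@tofrac T x).
Definition cK : {rmorphism R -> K} := (@tofrac T \o @mpolyC n R).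

Definition Rel (e : 'I_n -> R) (x : K) (r : R) :=
  exists a b : T, [/\ meval e b != 0, x = a%:F / b%:F & r = meval e a / meval e b].

Section RelS.
Variable e : 'I_n -> R.

Lemma meval_nz_neq0 (b : T) : meval e b != 0 -> b != 0.
Proof. by apply: contra => /eqP ->; rewrite meval0. Qed.

Lemma Rel_frac (a : T) : Rel e a%:F (meval e a).
Proof.
exists a, 1; rewrite meval1 oner_neq0 rmorph1 !divr1; split => //.
Qed.

Lemma Rel_D x y r t : Rel e x r -> Rel e y t -> Rel e (x + y) (r + t).
Proof.
move=> [a [b [hb -> ->]]] [c [d [hd -> ->]]].
have hb' := meval_nz_neq0 hb; have hd' := meval_nz_neq0 hd.
exists (a * d + c * b), (b * d); rewrite mevalM mulf_neq0 //; split => //.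
  by rewrite addf_div ?tofrac_eq0 // rmorphD !rmorphM.
by rewrite addf_div // mevalD !mevalM.
Qed.

Lemma Rel_M x y r t : Rel e x r -> Rel e y t -> Rel e (x * y) (r * t).
Proof.
move=> [a [b [hb -> ->]]] [c [d [hd -> ->]]].
exists (a * c), (b * d); rewrite mevalM mulf_neq0 //; split => //.
  by rewrite mulf_div !rmorphM.
by rewrite mulf_div !mevalM.
Qed.

Lemma Rel_V x y r t : Rel e x r -> Rel e y t -> t != 0 -> Rel e (x / y) (r / t).
Proof.
move=> [a [b [hb -> ->]]] [c [d [hd -> ->]]] ht.
have hc : meval e c != 0 by apply: contra ht => /eqP ->; rewrite mul0r.
exists (a * d), (b * c); rewrite mevalM mulf_neq0 //; split => //.
  by rewrite invf_div mulf_div !rmorphM.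
by rewrite invf_div mulf_div !mevalM.
Qed.

Lemma Rel_nz x r : Rel e x r -> r != 0 -> x != 0.
Proof.
move=> [a [b [hb -> ->]]] hr.
have ha : meval e a != 0 by apply: contra hr => /eqP ->; rewrite mul0r.
rewrite mulf_neq0 // ?invr_eq0 tofrac_eq0 meval_nz_neq0 //.
Qed.

Lemma Rel_phi (psi : 'I_n -> K) :
  (forall u, Rel e (psi u) (e u)) -> forall g, Rel e (mmap cK psi g) (meval e g).
Proof.
move=> hpsi; elim/mpoly_ind2 => [c|u|g1 g2 h1 h2|g1 g2 h1 h2].
- rewrite mmapC mevalC; have := Rel_frac c%:MP; by rewrite mevalC.
- by rewrite mmapXU mevalXU.
- by rewrite rmorphD mevalD; apply: Rel_D.
- by rewrite rmorphM mevalM; apply: Rel_M.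
Qed.

End RelS.

Lemma mmap_comp (S S' : comRingType) (f : {rmorphism R -> S}) (h : 'I_n -> S)
  (g : {rmorphism S -> S'}) x :
  g (mmap f h x) = mmap (g \o f) (g \o h) x.
Proof.
elim/mpoly_ind2: x => [c|u|g1 g2 h1 h2|g1 g2 h1 h2].
- by rewrite !mmapC.
- by rewrite !mmapXU.
- by rewrite !rmorphD /= h1 h2.
- by rewrite !rmorphM /= h1 h2.
Qed.
End Gen.

Local Notation "x %:F" := (@tofrac _ x).
Notation R := Rdefinitions.R.

Lemma rk_lt (x y j p k : nat) : (x < p)%N -> (y < j)%N -> (j * p <= k)%N -> (y * p + x < k)%N.
Proof.
move=> hx hy hk; have : (y.+1 * p <= j * p)%N by rewrite leq_mul2r hy orbT.
rewrite mulSn; lia.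
Qed.

Section Main.
Variable p : nat.
Variable E : rel 'I_p.
Hypothesis hE : naturally_ordered E.
Local Notation n := (nvars p).
Local Notation T := {mpoly R[n]}.
Local Notation K := {fraction T}.
Local Notation kill A := (mmap (@mpolyC n R) (fun u => if A u then 'X_u else 0)).

Definition var (i j : 'I_p) : 'I_n :=
  enum_rank (exist (fun x : 'I_p * 'I_p => leq x.1 x.2) _ (sym_pair_ok i j)).
Lemma sigmaE i j : sigma i j = 'X_(var i j). Proof. by []. Qed.
Definition pr (u : 'I_n) : 'I_p * 'I_p := val (enum_val u).
Lemma pr_var i j : pr (var i j) = if (i <= j)%N then (i, j) else (j, i).
Proof. by rewrite /pr /var enum_rankK. Qed.
Lemma pr_le u : ((pr u).1 <= (pr u).2)%N.
Proof. exact: (valP (enum_val u)). Qed.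
Lemma var_pr u : var (pr u).1 (pr u).2 = u.
Proof.
apply: enum_val_inj; rewrite /var enum_rankK; apply: val_inj => /=.
by rewrite pr_le -surjective_pairing.
Qed.

Definition ev (u : 'I_n) : R := if (pr u).1 == (pr u).2 then 1 else 0.
Definition free (u : 'I_n) : bool := ((pr u).1 == (pr u).2) || E (pr u).1 (pr u).2.
Definition rk (u : 'I_n) : nat := ((pr u).2 * p + (pr u).1)%N.
Definition AA (k : nat) : pred 'I_n := fun u => free u || (rk u < k)%N.

Lemma ev_var i j : ev (var i j) = if i == j then 1 else 0.
Proof.
rewrite /ev pr_var; case: leqP => //= _.
by rewrite eq_sym.
Qed.

Lemma meval_sigma i j : meval ev (sigma i j) = if i == j then 1 else 0.
Proof. by rewrite sigmaE mevalXU ev_var. Qed.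

Lemma A_small (a b j : 'I_p) k : (a < j)%N -> (b < j)%N -> (j * p <= k)%N ->
  AA k (var a b).
Proof.
move=> ha hb hk; apply/orP; right; rewrite /rk pr_var.
have ha' := ltn_ord a; have hb' := ltn_ord b.
case: (leqP a b) => _ /=.
  exact: (rk_lt ha' hb hk).
  exact: (rk_lt hb' ha hk).

Qed.

Lemma A_edge (a j : 'I_p) k : E a j -> AA k (var a j).
Proof.
move=> hj; have := hE hj => laj.
by apply/orP; left; rewrite /free pr_var (ltnW laj) /= hj orbT.
Qed.

Lemma nonedge_var (i j : 'I_p) : (i < j)%N -> ~~ E i j ->
  [/\ pr (var i j) = (i, j), ~~ free (var i j) & rk (var i j) = (j * p + i)%N].
Proof.
move=> hij hn; rewrite /free /rk pr_var (ltnW hij) /=; split => //.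
by rewrite (negbTE hn) orbF neq_ltn hij.
Qed.


Definition sj (j : 'I_p) : T := det_K (pa E j).

Definition Mij (i j : 'I_p) : 'M[T]_(#|pa E j|.+1) :=
  \matrix_(a < #|pa E j|.+1, b < #|pa E j|.+1)
    sigma (oapp (fun b : 'I_#|pa E j| => enum_val b) i (unlift ord0 a))
          (oapp (fun b : 'I_#|pa E j| => enum_val b) j (unlift ord0 b)).

Lemma genE (i j : 'I_p) : gen_G E (i, j) = \det (Mij i j).
Proof. by []. Qed.

Definition qq (i j : 'I_p) : T :=
  - \sum_(b < #|pa E j|) Mij i j ord0 (lift ord0 b) * cofactor (Mij i j) ord0 (lift ord0 b).

Lemma pa_lt (j : 'I_p) (b : 'I_#|pa E j|) : E (enum_val b) j.
Proof. by have := enum_valP b; rewrite inE. Qed.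

Lemma gen_expand (i j : 'I_p) : gen_G E (i, j) = sj j * 'X_(var i j) - qq i j.
Proof.
rewrite genE (expand_det_row _ ord0) big_ord_recl /qq opprK; congr (_ + _).
have e1 : Mij i j ord0 ord0 = 'X_(var i j) by rewrite mxE unlift_none.
have e2 : cofactor (Mij i j) ord0 ord0 = sj j.
  rewrite /cofactor.
  have -> : ((@ord0 #|pa E j|) + (@ord0 #|pa E j|))%N = 0%N by [].
  rewrite expr0 mul1r /sj /det_K /minor_det; congr (\det _); apply/matrixP => a b.
  by rewrite !mxE !liftK.
by rewrite e1 e2 mulrC.
Qed.

Lemma Mij_inT (i j : 'I_p) (a b : 'I_#|pa E j|.+1) :
  (i < j)%N -> (a != ord0) || (b != ord0) -> inT (AA (j * p + i)) (Mij i j a b).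
Proof.
move=> hij hab; rewrite mxE.
case: (unliftP ord0 a) => [a' _|ea]; case: (unliftP ord0 b) => [b' _|eb] /=.
- apply: inT_X; apply: A_small (hE (pa_lt _)) (hE (pa_lt _)) _; exact: leq_addr.
- exact/inT_X/A_edge/pa_lt.
- apply: inT_X; apply: A_small hij (hE (pa_lt _)) _; exact: leq_addr.
- by move: hab; rewrite ea eb eqxx.
Qed.

Lemma inT_1 (A : pred 'I_n) : inT A 1.
Proof. by rewrite -mpolyC1; apply: inT_C. Qed.

Lemma inT_cofactor (A : pred 'I_n) m (M : 'M[T]_m.+1) (x : 'I_m.+1) :
  (forall a b, inT A (row' ord0 (col' x M) a b)) -> inT A (cofactor M ord0 x).
Proof.
move=> h; apply: inT_M; first by apply/inT_X'/inT_N/inT_1.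
exact: inT_det.
Qed.

Lemma qq_inT (i j : 'I_p) : (i < j)%N -> inT (AA (j * p + i)) (qq i j).
Proof.
move=> hij; apply/inT_N/inT_sum => b; apply: inT_M.
  by apply: Mij_inT => //; rewrite neq_lift orbT.
apply: inT_cofactor => a c.
have -> : row' ord0 (col' (lift ord0 b) (Mij i j)) a c
          = Mij i j (lift ord0 a) (lift (lift ord0 b) c) by rewrite !mxE.
by apply: Mij_inT => //; rewrite neq_lift.
Qed.

Lemma sj_inT (i j : 'I_p) : (i < j)%N -> inT (AA (j * p + i)) (sj j).
Proof.
move=> hij; apply: inT_det => a b; rewrite mxE; apply: inT_X.
apply: A_small (hE (pa_lt _)) (hE (pa_lt _)) _; exact: leq_addr.
Qed.

Lemma meval_detK (S : {set 'I_p}) : meval ev (det_K S) = 1.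
Proof.
rewrite /det_K /minor_det -det_map_mx -[RHS](det1 _ #|S|); congr (\det _).
apply/matrixP => a b; rewrite !mxE /= meval_sigma (inj_eq enum_val_inj).
by case: eqP.
Qed.

Lemma meval_gen (i j : 'I_p) : (i < j)%N -> ~~ E i j -> meval ev (gen_G E (i, j)) = 0.
Proof.
move=> hij hn; rewrite genE -det_map_mx (expand_det_row _ ord0) big1 // => b _.
rewrite !mxE unlift_none /= meval_sigma.
case: (unliftP ord0 b) => [b' _|_] /=.
  case: eqP => [eib|]; last by rewrite mul0r.
  by move: (pa_lt b'); rewrite -eib (negbTE hn).
have -> : (i == j) = false by apply/eqP => e; move: hij; rewrite e ltnn.
by rewrite mul0r.
Qed.


Lemma AA_mono k k' : (k <= k')%N -> forall u, AA k u -> AA k' u.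
Proof.
move=> hk u; rewrite /AA => /orP [->//|hu]; apply/orP; right; exact: leq_trans hu hk.
Qed.

Lemma gen_inT (i j : 'I_p) k : (i < j)%N -> ~~ E i j -> (j * p + i < k)%N ->
  inT (AA k) (gen_G E (i, j)).
Proof.
move=> hij hn hk; have hk' := ltnW hk.
rewrite gen_expand; apply: inT_D; last first.
  by apply/inT_N/(inT_mono (AA_mono hk')) /qq_inT.
apply: inT_M; first by apply/(inT_mono (AA_mono hk')) /sj_inT.
apply: inT_X; apply/orP; right; have [_ _ ->] := nonedge_var hij hn; exact: hk.
Qed.

Lemma rk_inj (i j i' j' : 'I_p) : (j * p + i = j' * p + i')%N -> i = i' /\ j = j'.
Proof.
move=> h; have p0 : (0 < p)%N by apply: leq_ltn_trans (ltn_ord i).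
have hm : (i = i' :> nat).
  by have := congr1 (modn^~ p) h; rewrite !modnMDl !modn_small.
have hd : (j = j' :> nat).
  by have := congr1 (divn^~ p) h; rewrite !divnMDl // !divn_small // !addn0.
by split; apply: val_inj.
Qed.

Definition good k (psi : 'I_n -> K) :=
  [/\ forall u, free u -> psi u = ('X_u)%:F,
      forall u, Rel ev (psi u) (ev u) &
      forall i j : 'I_p, (i < j)%N -> ~~ E i j -> (j * p + i < k)%N ->
        mmap (cK n) psi (gen_G E (i, j)) = 0].

Lemma ev_nonfree u : ~~ free u -> ev u = 0.
Proof. by rewrite /free /ev negb_or => /andP [/negbTE -> _]. Qed.

Lemma good0 : exists psi, good 0 psi.
Proof.
exists (fun u => if free u then ('X_u)%:F else 0); split.
- by move=> u ->.
- move=> u; case: ifP => hu.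
    by have := Rel_frac ev 'X_u; rewrite mevalXU.
  rewrite ev_nonfree ?hu //; exists 0, 1; rewrite meval1 meval0 mul0r oner_neq0.
  by rewrite mul0r.
- by move=> i j _ _; rewrite ltn0.
Qed.

Lemma sj_nz (psi : 'I_n -> K) j : (forall u, Rel ev (psi u) (ev u)) ->
  mmap (cK n) psi (det_K (pa E j)) != 0.
Proof.
move=> hR; apply: (Rel_nz (Rel_phi hR _)).
by rewrite meval_detK oner_neq0.
Qed.

Lemma goodS k psi : good k psi -> exists psi', good k.+1 psi'.
Proof.
move=> [hF hR hG].
case: (boolP [exists ij : 'I_p * 'I_p,
   [&& (ij.1 < ij.2)%N, ~~ E ij.1 ij.2 & (ij.2 * p + ij.1 == k)%N]]); last first.
  move=> /existsPn hno; exists psi; split => // i j hij hn hk.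
  apply: hG => //; rewrite ltn_neqAle -ltnS hk andbT.
  by have := hno (i, j); rewrite /= hij hn.
move=> /existsP [[i j] /and3P [/= hij hn /eqP hk]].
have [prv nfv rkv] := nonedge_var hij hn.
have nAv : ~~ AA k (var i j) by rewrite /AA negb_or nfv rkv hk ltnn.
have [psi' Hpsi'] : exists psi' : 'I_n -> K, forall u, psi' u =
  if u == (var i j) then mmap (cK n) psi (qq i j) / mmap (cK n) psi (sj j)
  else psi u by eexists.
have agree : forall u, AA k u -> psi' u = psi u.
  by move=> u hu; rewrite Hpsi'; case: eqP => // e; move: nAv; rewrite -e hu.
have phiE : forall f, inT (AA k) f -> mmap (cK n) psi' f = mmap (cK n) psi f.
  by move=> f hf; apply: inT_mmap hf agree.
have hs : mmap (cK n) psi (sj j) != 0 by apply: sj_nz.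
have hkij : k = (j * p + i)%N by [].
exists psi'; split.
- move=> u hu; rewrite Hpsi'; case: eqP => [e|_]; last exact: hF.
  by move: nfv; rewrite -e hu.
- move=> u; rewrite Hpsi'; case: eqP => [->|_]; last exact: hR.
  have -> : ev (var i j) = meval ev (qq i j) / meval ev (sj j).
    have : meval ev (gen_G E (i, j)) = 0 by apply: meval_gen.
    rewrite gen_expand mevalB mevalM mevalXU ev_nonfree // /sj meval_detK.
    by rewrite mulr0 sub0r => /eqP; rewrite oppr_eq0 => /eqP ->; rewrite mul0r.
  apply: Rel_V; try exact: Rel_phi.
  by rewrite /sj meval_detK oner_neq0.
- move=> i' j' hij' hn' hk'.
  case: (ltngtP (j' * p + i') k) => [hlt|hgt|heq].
  + rewrite phiE; first exact: hG.
    exact: gen_inT.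
  + by move: hk'; rewrite ltnS leqNgt hgt.
  + have [ei ej] : i' = i /\ j' = j by apply: rk_inj; rewrite heq.
    subst i' j'.
    have e : mmap (cK n) psi' (gen_G E (i, j)) = mmap (cK n) psi' (sj j) *
      mmap (cK n) psi' 'X_(var i j) - mmap (cK n) psi' (qq i j).
      by rewrite gen_expand rmorphB rmorphM.
    rewrite e.
    have -> : mmap (cK n) psi' (sj j) = mmap (cK n) psi (sj j).
      by apply: phiE; rewrite -heq; apply: sj_inT.
    have -> : mmap (cK n) psi' (qq i j) = mmap (cK n) psi (qq i j).
      by apply: phiE; rewrite -heq; apply: qq_inT.
    rewrite mmapXU.
    rewrite Hpsi' eqxx mulrCA divff // mulr1 subrr //.
Qed.

Lemma good_all : exists psi, good (p * p) psi.
Proof.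
elim: (p * p)%N => [|k [psi hpsi]]; first exact: good0.
exact: goodS hpsi.
Qed.

Lemma I_G0 : I_G E 0.
Proof. by exists (fun _ => 0); rewrite big1 // => ij _; rewrite mul0r. Qed.

Lemma I_GD f g : I_G E f -> I_G E g -> I_G E (f + g).
Proof.
move=> [c1 ->] [c2 ->]; exists (fun ij => c1 ij + c2 ij).
by rewrite -big_split; apply: eq_bigr => ij _; rewrite mulrDl.
Qed.

Lemma I_GM a f : I_G E f -> I_G E (a * f).
Proof.
move=> [c ->]; exists (fun ij => a * c ij).
by rewrite mulr_sumr; apply: eq_bigr => ij _; rewrite mulrA.
Qed.

Lemma I_Ggen x ij : is_gen E ij -> I_G E (x * gen_G E ij).
Proof.
move=> hij; exists (fun ij' => if ij' == ij then x else 0).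
rewrite (bigD1 ij) //= eqxx big1 ?addr0 // => ij' /andP [_ /negbTE ->].
by rewrite mul0r.
Qed.

Lemma phi_IG (psi : 'I_n -> K) f :
  (forall ij, is_gen E ij -> mmap (cK n) psi (gen_G E ij) = 0) ->
  I_G E f -> mmap (cK n) psi f = 0.
Proof.
move=> hg [c ->]; rewrite rmorph_sum big1 // => ij hij.
by rewrite rmorphM /= hg // mulr0.
Qed.

Lemma S_G1 : S_G E 1.
Proof. by exists (fun _ => 0%N); rewrite big1 // => i _; rewrite expr0. Qed.

Lemma S_Gdet t j d : S_G E t -> S_G E (sj j ^+ d * t).
Proof.
move=> [k ->]; exists (fun i => (k i + (if i == j then d else 0))%N).
have -> : \prod_i det_K (pa E i) ^+ (k i + (if i == j then d else 0))%N =
  (\prod_i det_K (pa E i) ^+ k i) * \prod_i det_K (pa E i) ^+ (if i == j then d else 0)%N.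
  by rewrite -big_split; apply: eq_bigr => i _; rewrite exprD.
rewrite mulrC; congr (_ * _).
rewrite (bigD1 j) //= eqxx big1 ?mulr1 // => i /negbTE ->; by rewrite expr0.
Qed.

Lemma S_G_nz (psi : 'I_n -> K) t : (forall u, Rel ev (psi u) (ev u)) ->
  S_G E t -> mmap (cK n) psi t != 0.
Proof.
move=> hR [k ->]; rewrite rmorph_prod; apply/prodf_neq0 => i _.
by rewrite rmorphXn expf_neq0 //; apply: sj_nz.
Qed.

Lemma elimQ (i j : 'I_p) : (i < j)%N -> ~~ E i j -> forall g,
  inT (AA (j * p + i).+1) g ->
  exists d F c, inT (AA (j * p + i)) F /\ sj j ^+ d * g - F = c * gen_G E (i, j).
Proof.
move=> hij hn; set k := (j * p + i)%N.
have [prv nfv rkv] := nonedge_var hij hn.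
have hsk : inT (AA k) (sj j) by apply: sj_inT.
suff H : forall g, exists d F c, inT (AA k) F /\
    sj j ^+ d * kill (AA k.+1) g - F = c * gen_G E (i, j).
  by move=> g hg; rewrite -hg; apply: H.
elim/mpoly_ind2 => [c|u|g1 g2 [d1 [F1 [c1 [h1 e1]]]] [d2 [F2 [c2 [h2 e2]]]]|
                     g1 g2 [d1 [F1 [c1 [h1 e1]]]] [d2 [F2 [c2 [h2 e2]]]]].
- rewrite mmapC; exists 0%N, c%:MP, 0; split; first exact: inT_C.
  by rewrite expr0 mul1r subrr mul0r.
- rewrite kill_X; case hA: (AA k u).
    rewrite (AA_mono (leqnSn k) hA); exists 0%N, 'X_u, 0; split; first exact: inT_X.
    by rewrite expr0 mul1r subrr mul0r.
  case hA1: (AA k.+1 u); last first.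
    exists 0%N, 0, 0; split; last by rewrite mulr0 subrr mul0r.
    by rewrite -mpolyC0; apply: inT_C.
  have eu : u = var i j.
    have nfu : ~~ free u by move: hA; rewrite /AA; case: (free u).
    have rku : rk u = k.
      move: hA hA1; rewrite /AA (negbTE nfu) /= => /negbT; rewrite -leqNgt => h1 h2.
      by apply/eqP; rewrite eqn_leq -ltnS h2 h1.
    have [ea eb] := @rk_inj (pr u).1 (pr u).2 i j rku.
    by rewrite -(var_pr u) ea eb.
  subst u; exists 1%N, (qq i j), 1; split; first exact: qq_inT.
  by rewrite expr1 mul1r gen_expand.
- exists (d1 + d2)%N, (sj j ^+ d2 * F1 + sj j ^+ d1 * F2),
         (sj j ^+ d2 * c1 + sj j ^+ d1 * c2); split.
    by apply: inT_D; apply: inT_M => //; apply: inT_X'.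
  rewrite rmorphD exprD mulrDl -!mulrA -e1 -e2.
  set s1 := sj j ^+ d1; set s2 := sj j ^+ d2; ring.
- exists (d1 + d2)%N, (F1 * F2),
         (sj j ^+ d1 * kill (AA k.+1) g1 * c2 + F2 * c1); split.
    exact: inT_M.
  rewrite rmorphM exprD mulrDl -!mulrA -e2 -e1.
  set s1 := sj j ^+ d1; set s2 := sj j ^+ d2; ring.
Qed.


Lemma rk_all u : AA (p * p) u.
Proof.
apply/orP; right; rewrite /rk.
exact: rk_lt (ltn_ord (pr u).1) (ltn_ord (pr u).2) (leqnn _).
Qed.

Lemma nonedge_rk (i j : 'I_p) : (j * p + i < p * p)%N.
Proof. exact: rk_lt (ltn_ord i) (ltn_ord j) (leqnn _). Qed.

Lemma kernel_sat (psi : 'I_n -> K) : good (p * p) psi ->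
  forall k g, inT (AA k) g -> mmap (cK n) psi g = 0 -> saturation (I_G E) (S_G E) g.
Proof.
move=> [hF hR hG]; elim=> [|k IH] g hg hz.
  have : g%:F = 0.
    rewrite -hz -hg mmap_comp mmap_kill; apply: mmap_ext => // u /=.
    rewrite /AA orbF; case hu: (free u); first by rewrite hF.
    by rewrite rmorph0.
  move/eqP; rewrite tofrac_eq0 => /eqP ->.
  by exists 1; split; [exact: S_G1 | rewrite mul0r; exact: I_G0].
case: (boolP [exists ij : 'I_p * 'I_p,
   [&& (ij.1 < ij.2)%N, ~~ E ij.1 ij.2 & (ij.2 * p + ij.1 == k)%N]]); last first.
  move=> /existsPn hno; apply: IH hz; apply: inT_mono hg => u.
  rewrite /AA; case hfu: (free u) => //= hu; rewrite ltn_neqAle -ltnS hu andbT.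
  apply/eqP; rewrite /rk => hk; have := hno (pr u); rewrite /= hk eqxx andbT.
  move: hfu; rewrite /free => /negbT; rewrite negb_or => /andP [hne ->].
  by rewrite ltn_neqAle hne pr_le.
move=> /existsP [[i j] /and3P [/= hij hn /eqP hk]].
rewrite -hk in hg.
have [d [F [c [hFi eF]]]] := elimQ hij hn hg.
have eF' : F = sj j ^+ d * g - c * gen_G E (i, j).
  rewrite -eF; set X := sj j ^+ d * g; ring.
have hF0 : mmap (cK n) psi F = 0.
  have -> : mmap (cK n) psi F = mmap (cK n) psi (sj j ^+ d) * mmap (cK n) psi g
     - mmap (cK n) psi c * mmap (cK n) psi (gen_G E (i, j)).
    by rewrite eF' rmorphB !rmorphM.
  by rewrite hz hG // ?nonedge_rk // !mulr0 subrr.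
rewrite hk in hFi.
have [t [ht hIt]] := IH F hFi hF0.
exists (sj j ^+ d * t); split; first exact: S_Gdet.
have -> : g * (sj j ^+ d * t) = F * t + (c * t) * gen_G E (i, j).
  rewrite eF'; set X := sj j ^+ d; ring.
apply: I_GD => //; apply: I_Ggen; by rewrite /is_gen /= hij hn.
Qed.

Lemma phiD (psi : 'I_n -> K) a b :
  mmap (cK n) psi (a + b) = mmap (cK n) psi a + mmap (cK n) psi b.
Proof. exact: rmorphD. Qed.
Lemma phiM (psi : 'I_n -> K) a b :
  mmap (cK n) psi (a * b) = mmap (cK n) psi a * mmap (cK n) psi b.
Proof. exact: rmorphM. Qed.
Lemma phi0 (psi : 'I_n -> K) : mmap (cK n) psi 0 = 0.
Proof. exact: rmorph0. Qed.
Lemma phi1 (psi : 'I_n -> K) : mmap (cK n) psi 1 = 1.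
Proof. exact: rmorph1. Qed.

Lemma main_sec : @prime_ideal {mpoly Rdefinitions.R[nvars p]} (saturation (I_G E) (S_G E)).
Proof.
have [psi hg] := good_all; have [hF hR hG] := hg.
have hgen : forall ij, is_gen E ij -> mmap (cK n) psi (gen_G E ij) = 0.
  by case=> i j /andP [/= hij hn]; apply: hG => //; apply: nonedge_rk.
have key : forall f, saturation (I_G E) (S_G E) f <-> mmap (cK n) psi f = 0.
  move=> f; split.
    move=> [t [ht hI]]; have := phi_IG hgen hI.
    rewrite phiM => /eqP; rewrite mulf_eq0 (negbTE (S_G_nz hR ht)) orbF.
    by move/eqP.
  move=> hz; apply: (kernel_sat hg (k := (p * p)%N)) => //.
  by rewrite /inT kill_id // => u; apply: rk_all.
split.
- by apply/key; rewrite phi0.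
- by move=> a b /key ha /key hb; apply/key; rewrite phiD ha hb addr0.
- by move=> a b /key hb; apply/key; rewrite phiM hb mulr0.
- by move/key/eqP; rewrite phi1 oner_eq0.
- move=> a b /key; rewrite phiM => /eqP; rewrite mulf_eq0.
  by case/orP => /eqP h; [left | right]; apply/key.
Qed.

End Main.

Theorem mainTheorem10 (p : nat) (E : rel 'I_p) :
  naturally_ordered E ->
  @prime_ideal {mpoly Rdefinitions.R[nvars p]} (saturation (I_G E) (S_G E)).
Proof. by move=> hE; apply: main_sec. Qed.
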